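(* Let $\phi(r)=r^{-12}-2r^{-6}$ (Lennard-Jones), $\eta=\phi'$, $\hat\eta(r)=\eta(r)+2\eta(2r)$, let $\tilde r_2$ be the unique point with $\eta''<0$ on $(0,\tilde r_2)$ and $\eta''>0$ on $(\tilde r_2,\infty)$, and let $a_1$ be the unique point with $\hat\eta'>0$ on $(0,a_1)$ and $\hat\eta'<0$ on $(a_1,\infty)$. Let $N,K$ be positive integers with $K<N-1$. For $\mathbf r=(r_{-N},\dots,r_N)\in(0,\infty)^{2N+1}$ define $F^{QCF}_j(\mathbf r)$, $j=-N,\dots,N+1$, by $F^{QCF}_{-N}(\mathbf r)=\eta(r_{-N})+2\eta(2r_{-N})$; $F^{QCF}_j(\mathbf r)=[\eta(r_j)+2\eta(2r_j)]-[\eta(r_{j-1})+2\eta(2r_{j-1})]$ for $-N+1\le j\le -K$ and for $K+1\le j\le N$; $F^{QCF}_j(\mathbf r)=[\eta(r_j)+\eta(r_j+r_{j+1})]-[\eta(r_{j-1})+\eta(r_{j-1}+r_{j-2})]$ for $-K+1\le j\le K$; $F^{QCF}_{N+1}(\mathbf r)=-[\eta(r_N)+2\eta(2r_N)]$. Let $f_{-N},\dots,f_{N+1}\in\mathbb R$ be anti-symmetric, i.e. $f_{j+1}=-f_{-j}$ for $j=0,\dots,N$, and set $\Phi_j=-\sum_{i=-N}^{j}f_i$ for $j=-N,\dots,N$. For any $r_U$ with $\tilde r_2/2<r_U<a_1$, let $r_L=\max\left(\frac{\tilde r_2}{2},\left(\frac{63}{16\,\eta'(r_U)}\right)^{1/8}\right)$.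 If $r_L<r_U$, then the equilibrium equations $F^{QCF}_j(\mathbf r)+f_j=0$, $j=-N,\dots,N+1$, have a unique symmetric solution $\mathbf r$ in $\Omega=(r_L,r_U)^{2N+1}$ whenever $\eta(r_L)+4\eta(2r_L)-2\eta(2r_U)<\Phi_j<\eta(r_U)+4\eta(2r_U)-2\eta(2r_L)$ for $j=-N,\dots,N$.
   Context: $F^{QCF}_j$ is the force-based quasicontinuum force on the $j$-th representative atom of a one-dimensional chain in terms of the lattice spacings $r_j$; $f_j$ are external forces. A vector $\mathbf r$ is symmetric if $r_{-j}=r_j$ for $j=1,\dots,N$. *)

(* Defs.v *)
From Stdlib Require Import Reals ZArith Lra.
From Coquelicot Require Import Coquelicot.
Open Scope R_scope.

Definition phi (r : R) : R := / r ^ 12 - 2 * / r ^ 6.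
Definition eta (r : R) : R := Derive phi r.
Definition eta1 (r : R) : R := Derive eta r.
Definition eta2 (r : R) : R := Derive eta1 r.
Definition eta_hat (r : R) : R := eta r + 2 * eta (2 * r).
Definition eta_hat1 (r : R) : R := Derive eta_hat r.

Definition is_tilde_r2 (t : R) : Prop :=
  0 < t /\ (forall r, 0 < r < t -> eta2 r < 0) /\ (forall r, t < r -> 0 < eta2 r).

Definition is_a1 (a : R) : Prop :=
  0 < a /\ (forall r, 0 < r < a -> 0 < eta_hat1 r) /\ (forall r, a < r -> eta_hat1 r < 0).

Definition F_QCF (N K : Z) (r : Z -> R) (j : Z) : R :=
  if (j =? -N)%Z then eta (r (-N)%Z) + 2 * eta (2 * r (-N)%Z)
  else if (j =? N + 1)%Z then - (eta (r N) + 2 * eta (2 * r N))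
  else if ((-K + 1 <=? j)%Z && (j <=? K)%Z)%bool then
    (eta (r j) + eta (r j + r (j + 1)%Z))
    - (eta (r (j - 1)%Z) + eta (r (j - 1)%Z + r (j - 2)%Z))
  else (eta (r j) + 2 * eta (2 * r j))
    - (eta (r (j - 1)%Z) + 2 * eta (2 * r (j - 1)%Z)).

Definition Phi (N : Z) (f : Z -> R) (j : Z) : R :=
  - sum_f_R0 (fun k => f (Z.of_nat k - N)%Z) (Z.to_nat (j + N)).

Definition r_L (t2 rU : R) : R :=
  Rmax (t2 / 2) (Rpower (63 / (16 * eta1 rU)) (1 / 8)).

Definition symmetric_vec (N : Z) (r : Z -> R) : Prop :=
  forall j, (1 <= j <= N)%Z -> r (- j)%Z = r j.

Definition in_Omega (N : Z) (rL rU : R) (r : Z -> R) : Prop :=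
  forall j, (-N <= j <= N)%Z -> rL < r j < rU.

Definition equilibrium (N K : Z) (f : Z -> R) (r : Z -> R) : Prop :=
  forall j, (-N <= j <= N + 1)%Z -> F_QCF N K r j + f j = 0.

(* Main.v *)
Require Import Defs.
From Stdlib Require Import Reals ZArith Lra Lia.
From Stdlib Require Import IndefiniteDescription.
From Coquelicot Require Import Coquelicot.
Open Scope R_scope.
Definition EE (r:R) := 12 * / r ^ 7 - 12 * / r ^ 13.
Definition EE1 (r:R) := 156 * / r ^ 14 - 84 * / r ^ 8.
Definition EE2 (r:R) := 672 * / r ^ 9 - 2184 * / r ^ 15.

Lemma loc_pos x : 0 < x -> locally x (fun t => 0 < t).
Proof.
  intros Hx. assert (H: 0 < x/2) by lra.
  exists (mkposreal _ H). intros y Hy. unfold ball in Hy; simpl in Hy.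
  unfold AbsRing_ball, abs, minus, plus, opp in Hy; simpl in Hy.
  apply Rabs_lt_between in Hy. lra.
Qed.

Lemma E_deriv x : 0 < x -> is_derive EE x (EE1 x).
Proof. intros Hx. unfold EE, EE1. auto_derive.
  - repeat split; apply Rgt_not_eq; repeat apply Rmult_lt_0_compat; lra.
  - field. lra.
Qed.
Lemma E1_deriv x : 0 < x -> is_derive EE1 x (EE2 x).
Proof. intros Hx. unfold EE1, EE2. auto_derive.
  - repeat split; apply Rgt_not_eq; repeat apply Rmult_lt_0_compat; lra.
  - field. lra.
Qed.
Lemma phi_deriv x : 0 < x -> is_derive phi x (EE x).
Proof. intros Hx. unfold phi, EE. auto_derive.
  - repeat split; apply Rgt_not_eq; repeat apply Rmult_lt_0_compat; lra.
  - field. lra.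
Qed.
Lemma eta_E x : 0 < x -> eta x = EE x.
Proof. intros; unfold eta; apply is_derive_unique, phi_deriv; auto. Qed.
Lemma eta_deriv x : 0 < x -> is_derive eta x (EE1 x).
Proof. intros Hx. apply (is_derive_ext_loc EE). 
  generalize (loc_pos x Hx). apply filter_imp. intros t Ht. symmetry; apply eta_E; auto.
  apply E_deriv; auto. Qed.
Lemma eta1_E x : 0 < x -> eta1 x = EE1 x.
Proof. intros; unfold eta1; apply is_derive_unique, eta_deriv; auto. Qed.
Lemma eta1_deriv x : 0 < x -> is_derive eta1 x (EE2 x).
Proof. intros Hx. apply (is_derive_ext_loc EE1). 
  generalize (loc_pos x Hx). apply filter_imp. intros t Ht. symmetry; apply eta1_E; auto.
  apply E1_deriv; auto. Qed.
Lemma eta2_E x : 0 < x -> eta2 x = EE2 x.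
Proof. intros; unfold eta2; apply is_derive_unique, eta1_deriv; auto. Qed.
Lemma eta_hat1_E x : 0 < x -> eta_hat1 x = EE1 x + 4 * EE1 (2*x).
Proof. intros Hx; unfold eta_hat1, eta_hat. apply is_derive_unique.
  assert (H1 := eta_deriv x Hx).
  assert (H2: is_derive (fun t => eta (2*t)) x (2 * EE1 (2*x))).
  { eapply is_derive_ext. 2: apply (is_derive_comp eta (fun t => 2*t)).
    intros; reflexivity. apply eta_deriv; lra.
    auto_derive; auto; ring. }
  generalize (is_derive_plus _ _ x _ _ H1 (is_derive_scal _ x 2 _ H2)).
  unfold plus, scal, mult; simpl; unfold mult; simpl. intros H.
  replace (EE1 x + 4 * EE1 (2*x)) with (EE1 x + 2 * (2 * EE1 (2 * x))) by ring. exact H.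
Qed.
Lemma E_cont x : 0 < x -> continuity_pt EE x.
Proof. intros Hx. apply continuity_pt_filterlim. apply (ex_derive_continuous (K:=R_AbsRing) (V:=R_NormedModule)).
  eexists; apply E_deriv; auto. Qed.
Lemma E1_cont x : 0 < x -> continuity_pt EE1 x.
Proof. intros Hx. apply continuity_pt_filterlim. apply (ex_derive_continuous (K:=R_AbsRing) (V:=R_NormedModule)).
  eexists; apply E1_deriv; auto. Qed.

Lemma E1_form r : 0 < r -> EE1 r = (156 - 84 * r^6) / r^14.
Proof. intros; unfold EE1; field; lra. Qed.
Lemma E2_form r : 0 < r -> EE2 r = (672 * r^6 - 2184) / r^15.
Proof. intros; unfold EE2; field; lra. Qed.
Lemma Ehat1_form r : 0 < r -> EE1 r + 4 * EE1 (2*r) = (156 + 624/16384 - (84 + 336/256) * r^6) / r^14.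
Proof. intros; unfold EE1; field; lra. Qed.

Lemma t2_ge t2 : is_tilde_r2 t2 -> 6/5 <= t2.
Proof. intros [H0 [H1 H2]]. destruct (Rle_or_lt (6/5) t2) as [h|h]; auto.
  exfalso. specialize (H2 (6/5) h). rewrite eta2_E in H2 by lra.
  rewrite E2_form in H2 by lra. 
  assert (0 < (6/5)^15) by (apply pow_lt; lra).
  assert (672 * (6/5)^6 - 2184 < 0) by (simpl; lra).
  assert ((672 * (6 / 5) ^ 6 - 2184) / (6 / 5) ^ 15 < 0).
  { unfold Rdiv. apply Rmult_neg_pos; auto. apply Rinv_0_lt_compat; auto. } lra.
Qed.

Lemma a1_bound a1 r : is_a1 a1 -> 0 < r < a1 -> r^6 < 183/100.
Proof. intros [H0 [H1 H2]] Hr. specialize (H1 r Hr). rewrite eta_hat1_E in H1 by lra.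
  rewrite Ehat1_form in H1 by lra. assert (0 < r^14) by (apply pow_lt; lra).
  assert (0 < 156 + 624 / 16384 - (84 + 336 / 256) * r ^ 6).
  { apply (Rmult_lt_reg_r (/ r^14)). apply Rinv_0_lt_compat; auto. rewrite Rmult_0_l. exact H1. }
  lra.
Qed.

Lemma mvt_lb f df a b m : 0 < a <= b ->
  (forall z, a <= z <= b -> is_derive f z (df z) /\ continuity_pt f z) ->
  (forall z, a <= z <= b -> m <= df z) -> m * (b - a) <= f b - f a.
Proof. intros Hab Hd Hm.
  destruct (MVT_gen f a b df) as [c [Hc Heq]].
  - intros x Hx. apply Hd. rewrite Rmin_left, Rmax_right in Hx by lra. lra.
  - intros x Hx. apply Hd. rewrite Rmin_left, Rmax_right in Hx by lra. lra.
  - rewrite Rmin_left, Rmax_right in Hc by lra. rewrite Heq.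
    apply Rmult_le_compat_r. lra. apply Hm; auto.
Qed.
Lemma mvt_ub f df a b m : 0 < a <= b ->
  (forall z, a <= z <= b -> is_derive f z (df z) /\ continuity_pt f z) ->
  (forall z, a <= z <= b -> df z <= m) -> f b - f a <= m * (b - a).
Proof. intros Hab Hd Hm.
  destruct (MVT_gen f a b df) as [c [Hc Heq]].
  - intros x Hx. apply Hd. rewrite Rmin_left, Rmax_right in Hx by lra. lra.
  - intros x Hx. apply Hd. rewrite Rmin_left, Rmax_right in Hx by lra. lra.
  - rewrite Rmin_left, Rmax_right in Hc by lra. rewrite Heq.
    apply Rmult_le_compat_r. lra. apply Hm; auto.
Qed.

Lemma E1_decr z U : 0 < z <= U -> U^6 < 13/4 -> EE1 U <= EE1 z.
Proof. intros Hz HU.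
  assert (EE1 U - EE1 z <= 0 * (U - z)).
  { apply mvt_ub with (df := EE2). lra.
    intros w Hw; split. apply E1_deriv; lra. apply E1_cont; lra.
    intros w Hw. rewrite E2_form by lra. assert (0 < w^15) by (apply pow_lt; lra).
    assert (w^6 <= U^6) by (apply pow_incr; lra).
    unfold Rdiv. apply Rmult_le_0_r. lra. apply Rlt_le, Rinv_0_lt_compat; auto. }
  lra.
Qed.

Lemma M1 L U x y : 0 < L -> U^6 < 13/4 -> L <= x <= y -> y <= U -> EE1 U * (y - x) <= EE y - EE x.
Proof. intros HL HU Hx Hy. apply mvt_lb with (df := EE1). lra.
  intros w Hw; split. apply E_deriv; lra. apply E_cont; lra.
  intros w Hw. apply E1_decr; auto; lra.
Qed.

Lemma M2 L s t : 6/5 <= 2*L -> 2*L <= s <= t ->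
  - (84 / (2*L)^8) * (t - s) <= EE t - EE s <= 0.
Proof. intros HL Hs. split.
  - apply mvt_lb with (df := EE1). lra.
    intros w Hw; split. apply E_deriv; lra. apply E_cont; lra.
    intros w Hw. unfold EE1. assert (0 < w^14) by (apply pow_lt; lra).
    assert (0 < (2*L)^8) by (apply pow_lt; lra).
    assert ((2*L)^8 <= w^8) by (apply pow_incr; lra).
    assert (/ w^8 <= / (2*L)^8) by (apply Rinv_le_contravar; lra).
    assert (0 < / w^14) by (apply Rinv_0_lt_compat; lra). unfold Rdiv. lra.
  - assert (EE t - EE s <= 0 * (t - s)); [|lra].
    apply mvt_ub with (df := EE1). lra.
    intros w Hw; split. apply E_deriv; lra. apply E_cont; lra.
    intros w Hw. rewrite E1_form by lra. assert (0 < w^14) by (apply pow_lt; lra).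
    assert ((6/5)^6 <= w^6) by (apply pow_incr; lra).
    assert (2 < (6/5)^6) by (simpl; lra).
    unfold Rdiv. apply Rmult_le_0_r. lra. apply Rlt_le, Rinv_0_lt_compat; auto.
Qed.

Lemma Ehat_cont a z : 0 < a -> continuity_pt (fun y => EE y + 2 * EE (2*y) - z) a.
Proof. intros Ha.
  change (continuity_pt (minus_fct (plus_fct EE (mult_real_fct 2 (comp EE (mult_real_fct 2 id)))) (fct_cte z)) a).
  apply continuity_pt_minus; [apply continuity_pt_plus|apply continuity_pt_const; intros ? ?; reflexivity].
  apply E_cont; auto. apply continuity_pt_scal. apply continuity_pt_comp.
  apply continuity_pt_scal. apply derivable_continuous_pt, derivable_pt_id.
  apply E_cont. unfold mult_real_fct, id. lra.
Qed.
Lemma E_cont_shift a z : 0 < a -> continuity_pt (fun y => EE y - z) a.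
Proof. intros Ha. change (continuity_pt (minus_fct EE (fct_cte z)) a).
  apply continuity_pt_minus; [apply E_cont; auto|apply continuity_pt_const; intros ? ?; reflexivity]. Qed.

Fixpoint mx (g : nat -> R) (n : nat) : R :=
  match n with O => 0 | S m => Rmax (mx g m) (g m) end.
Lemma mx_ge g n k : (k < n)%nat -> g k <= mx g n.
Proof. induction n; intros H; [lia|]. simpl. destruct (Nat.eq_dec k n).
  subst; apply Rmax_r. eapply Rle_trans; [apply IHn; lia| apply Rmax_l]. Qed.
Lemma mx_le g n B : 0 <= B -> (forall k, (k < n)%nat -> g k <= B) -> mx g n <= B.
Proof. induction n; intros H0 H; simpl; auto. apply Rmax_lub; auto. Qed.
Lemma mx_nonneg g n : 0 <= mx g n.
Proof. induction n; simpl. lra. eapply Rle_trans; [apply IHn| apply Rmax_l]. Qed.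

Lemma abs_le a x : -a <= x <= a -> Rabs x <= a.
Proof. unfold Rabs; destruct Rcase_abs; lra. Qed.
Section C.
Definition inbox (n : nat) (A B : R) (x : nat -> R) := forall k, (k < n)%nat -> A <= x k <= B.
Definition lipq (n : nat) (A B q : R) (T : (nat -> R) -> nat -> R) :=
  forall x y delta, inbox n A B x -> inbox n A B y ->
   (forall k, (k < n)%nat -> Rabs (x k - y k) <= delta) ->
   forall i, (i < n)%nat -> Rabs (T x i - T y i) <= q * delta.
End C.

Lemma contraction_uniq n A B q T x y : 0 <= q < 1 -> lipq n A B q T ->
  inbox n A B x -> inbox n A B y -> (forall i, (i<n)%nat -> T x i = x i) ->
  (forall i, (i<n)%nat -> T y i = y i) -> forall k, (k < n)%nat -> x k = y k.
Proof. intros Hq HT Hx Hy Fx Fy.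
  set (M := mx (fun k => Rabs (x k - y k)) n).
  assert (HM: forall k, (k<n)%nat -> Rabs (x k - y k) <= M).
  { intros k Hk. apply (mx_ge (fun k => Rabs (x k - y k))); auto. }
  assert (M0 : 0 <= M) by apply mx_nonneg.
  assert (M <= q * M).
  { apply mx_le. apply Rmult_le_pos; lra. intros k Hk. rewrite <- Fx, <- Fy by auto.
    apply HT with (delta := M); auto. }
  assert (M <= 0) by nra.
  intros k Hk. specialize (HM k Hk). revert HM. unfold Rabs; destruct Rcase_abs; lra.
Qed.

Lemma lim_bound (u : nat -> R) l m b : Un_cv u l -> (forall p, (p >= m)%nat -> Rabs (u p - u m) <= b) ->
  Rabs (l - u m) <= b.
Proof. intros Hc Hb. destruct (Rle_or_lt (Rabs (l - u m)) b) as [h|h]; auto. exfalso.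
  destruct (Hc (Rabs (l - u m) - b)) as [N HN]. lra.
  specialize (HN (max N m) ltac:(lia)). specialize (Hb (max N m) ltac:(lia)).
  unfold R_dist in HN.
  assert (Rabs (l - u m) <= Rabs (u (max N m) - l) + Rabs (u (max N m) - u m)).
  { replace (l - u m) with (-(u (max N m) - l) + (u (max N m) - u m)) by ring.
    eapply Rle_trans. apply Rabs_triang. rewrite Rabs_Ropp. lra. }
  lra.
Qed.

Lemma lim_in (u : nat -> R) l A B : Un_cv u l -> (forall p, A <= u p <= B) -> A <= l <= B.
Proof. intros Hc Hb. split.
  - destruct (Rle_or_lt A l) as [h|h]; auto. exfalso.
    destruct (Hc (A - l)) as [N HN]. lra. specialize (HN N ltac:(lia)). specialize (Hb N).
    unfold R_dist in HN. apply Rabs_def2 in HN. lra.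
  - destruct (Rle_or_lt l B) as [h|h]; auto. exfalso.
    destruct (Hc (l - B)) as [N HN]. lra. specialize (HN N ltac:(lia)). specialize (Hb N).
    unfold R_dist in HN. apply Rabs_def2 in HN. lra.
Qed.

Lemma contraction_fix n A B q T : A <= B -> 0 <= q < 1 -> lipq n A B q T ->
  (forall x, inbox n A B x -> inbox n A B (T x)) ->
  exists x, inbox n A B x /\ forall i, (i<n)%nat -> T x i = x i.
Proof. intros HAB Hq HT Hbox.
  set (X := fun m => Nat.iter m T (fun _ => A)).
  assert (XS : forall m, X (S m) = T (X m)) by reflexivity.
  assert (Xb : forall m, inbox n A B (X m)).
  { induction m. intros k _; simpl; lra. rewrite XS; auto. }
  assert (Xstep : forall m k, (k<n)%nat -> Rabs (X (S m) k - X m k) <= q^m * (B - A)).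
  { induction m; intros k Hk.
    - simpl pow. pose proof (Xb 1%nat k Hk). pose proof (Xb 0%nat k Hk).
      apply abs_le. lra.
    - rewrite XS, (XS m). replace (q ^ S m * (B - A)) with (q * (q^m * (B-A))) by (simpl; ring).
      apply HT; auto. }
  assert (Hr : 0 < 1 - q) by lra.
  set (beta := fun m => q^m * (B - A) / (1 - q)).
  assert (Hqm : forall m, 0 <= q^m) by (intros; apply pow_le; lra).
  assert (Hcau : forall m l k, (k<n)%nat -> Rabs (X (m + l)%nat k - X m k) <= (q^m - q^(m+l)) * (B - A) / (1 - q)).
  { intros m l k Hk. induction l.
    - rewrite Nat.add_0_r. unfold Rminus at 1 2. rewrite !Rplus_opp_r, Rabs_R0. unfold Rdiv. rewrite !Rmult_0_l. lra.
    - replace (m + S l)%nat with (S (m + l)) by lia.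
      eapply Rle_trans. 
      { replace (X (S (m + l)) k - X m k) with ((X (S (m + l)) k - X (m+l)%nat k) + (X (m+l)%nat k - X m k)) by ring.
        apply Rabs_triang. }
      pose proof (Xstep (m+l)%nat k Hk).
      replace ((q ^ m - q ^ S (m + l)) * (B - A) / (1 - q)) with
        (q^(m+l) * (B - A) + (q ^ m - q ^ (m + l)) * (B - A) / (1 - q)) by (simpl; field; lra).
      lra. }
  assert (Hbeta : forall m p k, (k<n)%nat -> (p >= m)%nat -> Rabs (X p k - X m k) <= beta m).
  { intros m p k Hk Hp. replace p with (m + (p - m))%nat by lia.
    eapply Rle_trans. apply Hcau; auto. unfold beta. unfold Rdiv.
    apply Rmult_le_compat_r. apply Rlt_le, Rinv_0_lt_compat; lra.
    apply Rmult_le_compat_r. lra. pose proof (Hqm (m + (p-m))%nat). lra. }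
  assert (Hsmall : forall eps, 0 < eps -> exists N, forall m, (m >= N)%nat -> 2 * beta m < eps).
  { intros eps He. destruct (pow_lt_1_zero q) with (y := eps * (1 - q) / (2 * (B - A) + 1)) as [N HN].
    rewrite Rabs_right; lra. apply Rdiv_lt_0_compat; [apply Rmult_lt_0_compat|]; lra.
    exists N. intros m Hm. specialize (HN m Hm). rewrite Rabs_right in HN by (apply Rle_ge; auto).
    assert (q^m * (2 * (B - A) + 1) < eps * (1 - q)).
    { apply (Rmult_lt_compat_r (2 * (B - A) + 1)) in HN; [|lra].
      unfold Rdiv in HN. rewrite Rmult_assoc, Rinv_l in HN by lra. lra. }
    unfold beta. apply (Rmult_lt_reg_r (1 - q)); auto. unfold Rdiv.
    replace (2 * (q ^ m * (B - A) * / (1 - q)) * (1 - q)) with (2 * q^m * (B - A)) by (field; lra).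
    pose proof (Hqm m). nra. }
  assert (Hlim : forall k, exists l, (k < n)%nat -> Un_cv (fun m => X m k) l).
  { intros k. destruct (Compare_dec.lt_dec k n) as [Hk|Hk].
    - destruct (Rcomplete.R_complete (fun m => X m k)) as [l Hl].
      + intros eps He. destruct (Hsmall eps He) as [N HN]. exists N. intros a b Ha Hb.
        unfold R_dist. replace (X a k - X b k) with ((X a k - X N k) - (X b k - X N k)) by ring.
        eapply Rle_lt_trans. apply Rabs_triang. rewrite Rabs_Ropp.
        pose proof (Hbeta N a k Hk Ha). pose proof (Hbeta N b k Hk Hb). pose proof (HN N (le_n _)). lra.
      + exists l; auto.
    - exists 0. intros; lia. }
  set (xs := fun k => proj1_sig (constructive_indefinite_description _ (Hlim k))).
  assert (Hxs : forall k, (k < n)%nat -> Un_cv (fun m => X m k) (xs k)).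
  { intros k. unfold xs. destruct constructive_indefinite_description; simpl; auto. }
  assert (Hxbox : inbox n A B xs).
  { intros k Hk. apply (lim_in (fun m => X m k)); auto. intros p; apply Xb; auto. }
  assert (Hxd : forall m k, (k<n)%nat -> Rabs (xs k - X m k) <= beta m).
  { intros m k Hk. apply (lim_bound (fun m => X m k)); auto. }
  exists xs. split; auto. intros i Hi.
  assert (forall eps, 0 < eps -> Rabs (T xs i - xs i) < eps).
  { intros eps He. destruct (Hsmall eps He) as [N HN]. specialize (HN N (le_n _)).
    assert (Rabs (T xs i - T (X N) i) <= q * beta N) by (apply HT; auto).
    pose proof (Hxd (S N) i Hi). rewrite XS in H0.
    assert (beta (S N) <= beta N).
    { unfold beta; unfold Rdiv. apply Rmult_le_compat_r. apply Rlt_le, Rinv_0_lt_compat; lra.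
      apply Rmult_le_compat_r. lra. simpl. pose proof (Hqm N). nra. }
    assert (0 <= beta N).
    { unfold beta; unfold Rdiv. apply Rmult_le_pos. apply Rmult_le_pos; auto. lra. apply Rlt_le, Rinv_0_lt_compat; lra. }
    replace (T xs i - xs i) with ((T xs i - T (X N) i) - (xs i - T (X N) i)) by ring.
    eapply Rle_lt_trans. apply Rabs_triang. rewrite Rabs_Ropp. nra. }
  destruct (Req_dec (T xs i - xs i) 0). lra.
  exfalso. specialize (H (Rabs (T xs i - xs i))). assert (0 < Rabs (T xs i - xs i)) by (apply Rabs_pos_lt; auto).
  specialize (H H1). lra.
Qed.

Definition u (r : Z -> R) (j : Z) := eta (r j) + eta (r j + r (j+1)%Z) + eta (r (j-1)%Z + r j).
Definition P (K : Z) (r : Z -> R) (j : Z) :=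
  if orb (j <=? -K)%Z (K <=? j)%Z then eta_hat (r j) else u r j + eta_hat (r (-K)%Z) - u r (-K)%Z.

Lemma u_pred r j : u r (j-1)%Z = eta (r (j-1)%Z) + eta (r (j-1)%Z + r j) + eta (r (j-2)%Z + r (j-1)%Z).
Proof. unfold u. replace (j - 1 + 1)%Z with j by lia. replace (j - 1 - 1)%Z with (j - 2)%Z by lia. reflexivity. Qed.

Lemma F_first N K r : (0 < K < N)%Z -> F_QCF N K r (-N)%Z = P K r (-N)%Z.
Proof. intros H. unfold F_QCF, P. rewrite Z.eqb_refl. 
  destruct (Z.leb_spec (-N) (-K)); [|lia]. simpl. reflexivity. Qed.

Lemma F_last N K r : (0 < K < N)%Z -> F_QCF N K r (N+1)%Z = - P K r N.
Proof. intros H. unfold F_QCF, P. destruct (Z.eqb_spec (N+1) (-N)); [lia|]. rewrite Z.eqb_refl.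
  destruct (Z.leb_spec K N); [|lia]. rewrite Bool.orb_true_r. reflexivity. Qed.

Lemma F_mid N K r j : (0 < K)%Z -> (K < N - 1)%Z -> (-N < j <= N)%Z ->
  r K = r (-K)%Z -> r (K+1)%Z = r (-K-1)%Z -> r (K-1)%Z = r (-K+1)%Z ->
  F_QCF N K r j = P K r j - P K r (j-1)%Z.
Proof. intros HK HKN Hj S0 S1 S2. unfold F_QCF, P.
  destruct (Z.eqb_spec j (-N)); [lia|]. destruct (Z.eqb_spec j (N+1)); [lia|].
  destruct (Z.leb_spec (-K+1) j); destruct (Z.leb_spec j K); simpl;
  destruct (Z.leb_spec j (-K)); destruct (Z.leb_spec K j); simpl;
  destruct (Z.leb_spec (j-1) (-K)); destruct (Z.leb_spec K (j-1)); simpl; try lia;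
  unfold eta_hat; try reflexivity.
  - assert (j = K) by lia. subst j. rewrite u_pred. unfold u.
    rewrite <- S0, <- S1, <- S2.
    rewrite (Rplus_comm (r (K+1)%Z) (r K)), (Rplus_comm (r K) (r (K-1)%Z)), (Rplus_comm (r (K-2)%Z) (r (K-1)%Z)). ring.
  - assert (K = 1 - j)%Z by lia. subst K. unfold u.
    replace (- (1 - j) + 1)%Z with j by lia. replace (- (1 - j) - 1)%Z with (j-2)%Z by lia.
    replace (- (1 - j))%Z with (j-1)%Z by lia.
    rewrite (Rplus_comm (r (j-2)%Z) (r (j-1)%Z)). ring.
  - rewrite u_pred. unfold u. rewrite (Rplus_comm (r (j-2)%Z)). ring.
Qed.

Lemma Phi_base N f : (0 <= N)%Z -> Phi N f (-N)%Z = - f (-N)%Z.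
Proof. intros. unfold Phi. replace (-N + N)%Z with 0%Z by lia. simpl. reflexivity. Qed.

Lemma Phi_step N f j : (-N < j)%Z -> Phi N f j = Phi N f (j-1)%Z - f j.
Proof. intros H. unfold Phi. replace (Z.to_nat (j + N)) with (S (Z.to_nat (j - 1 + N))) by lia.
  rewrite tech5. cbv beta. replace (Z.of_nat (S (Z.to_nat (j - 1 + N))) - N)%Z with j by lia. ring. Qed.

Lemma Phi_sym N f : (0 < N)%Z -> (forall j, (0 <= j <= N)%Z -> f (j + 1)%Z = - f (- j)%Z) ->
  forall j, (0 <= j <= N)%Z -> Phi N f (-j)%Z = Phi N f j.
Proof. intros HN Hf j Hj. replace j with (Z.of_nat (Z.to_nat j)) by lia.
  assert (Hm : (Z.to_nat j <= Z.to_nat N)%nat) by lia. clear Hj.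
  induction (Z.to_nat j) as [|m IH].
  - simpl. reflexivity.
  - rewrite (Phi_step N f (Z.of_nat (S m))) by lia.
    pose proof (Phi_step N f (- Z.of_nat m)%Z ltac:(lia)) as H1.
    replace (- Z.of_nat m - 1)%Z with (- Z.of_nat (S m))%Z in H1 by lia.
    replace (Z.of_nat (S m) - 1)%Z with (Z.of_nat m) by lia.
    replace (Z.of_nat (S m)) with (Z.of_nat m + 1)%Z at 2 by lia. rewrite Hf by lia.
    rewrite IH in H1 by lia. lra.
Qed.

Definition sym3 (K : Z) (r : Z -> R) :=
  r K = r (-K)%Z /\ r (K+1)%Z = r (-K-1)%Z /\ r (K-1)%Z = r (-K+1)%Z.

Lemma eq_of_P N K f r : (0 < K)%Z -> (K < N - 1)%Z ->
  (forall j, (0 <= j <= N)%Z -> f (j + 1)%Z = - f (- j)%Z) -> sym3 K r ->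
  (forall j, (-N <= j <= N)%Z -> P K r j = Phi N f j) -> equilibrium N K f r.
Proof. intros HK HKN Hf [S0 [S1 S2]] HP j Hj.
  destruct (Z.eq_dec j (-N)) as [e|e].
  - subst j. rewrite F_first by lia. rewrite HP by lia. rewrite Phi_base by lia. ring.
  - destruct (Z.eq_dec j (N+1)) as [e'|e'].
    + subst j. rewrite F_last by lia. rewrite HP by lia. rewrite <- Phi_sym with (f := f) by (auto; lia).
      rewrite Phi_base by lia. rewrite Hf by lia. ring.
    + rewrite F_mid by (auto; lia). rewrite !HP by lia. rewrite (Phi_step N f j) by lia. ring.
Qed.

Lemma P_of_eq N K f r : (0 < K)%Z -> (K < N - 1)%Z -> sym3 K r -> equilibrium N K f r ->
  forall j, (-N <= j <= N)%Z -> P K r j = Phi N f j.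
Proof. intros HK HKN [S0 [S1 S2]] He j Hj.
  replace j with (-N + Z.of_nat (Z.to_nat (j + N)))%Z by lia.
  assert (Hm : (Z.to_nat (j + N) <= Z.to_nat (2*N))%nat) by lia. clear Hj.
  induction (Z.to_nat (j + N)) as [|m IH].
  - replace (-N + Z.of_nat 0)%Z with (-N)%Z by lia. rewrite <- F_first by lia.
    rewrite Phi_base by lia. specialize (He (-N)%Z ltac:(lia)). lra.
  - specialize (IH ltac:(lia)). set (jj := (-N + Z.of_nat (S m))%Z).
    specialize (He jj ltac:(unfold jj; lia)). rewrite F_mid in He by (auto; unfold jj; lia).
    rewrite (Phi_step N f jj) by (unfold jj; lia).
    replace (jj - 1)%Z with (-N + Z.of_nat m)%Z in * by (unfold jj; lia). lra.
Qed.

Lemma abs3 a b c0 A B C : Rabs a <= A -> Rabs b <= B -> Rabs c0 <= C -> Rabs (a - b - c0) <= A + B + C.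
Proof. unfold Rabs; repeat destruct Rcase_abs; lra. Qed.
Lemma abs_sum a b a' b' : Rabs (a + b - (a' + b')) <= Rabs (a - a') + Rabs (b - b').
Proof. unfold Rabs; repeat destruct Rcase_abs; lra. Qed.


Definition build (K : Z) (rho : Z -> R) (x : nat -> R) (j : Z) : R :=
  if (Z.abs j <? K)%Z then x (Z.to_nat (Z.abs j)) else rho (- Z.abs j)%Z.
Definition RHS N K f (r : Z -> R) (j : Z) :=
  Phi N f j - eta_hat (r (-K)%Z) + u r (-K)%Z - eta (r j + r (j+1)%Z) - eta (r (j-1)%Z + r j).

Lemma build_sym K rho x j : build K rho x (-j) = build K rho x j.
Proof. unfold build. rewrite Z.abs_opp. reflexivity. Qed.

Lemma P_mid_iff N K f r j : (-K < j < K)%Z -> (P K r j = Phi N f j <-> eta (r j) = RHS N K f r j).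
Proof. intros H. unfold P, RHS.
  destruct (Z.leb_spec j (-K)); [lia|]. destruct (Z.leb_spec K j); [lia|]. simpl.
  unfold u at 1. split; intros; lra. Qed.

Lemma RHS_sym N K f r j : (0 < N)%Z -> (forall j, (0 <= j <= N)%Z -> f (j + 1)%Z = - f (- j)%Z) ->
  (forall m, r (-m)%Z = r m) -> (0 <= j <= N)%Z -> RHS N K f r (-j)%Z = RHS N K f r j.
Proof. intros HN Hf Hs Hj. unfold RHS. rewrite Phi_sym by auto.
  replace (-j+1)%Z with (-(j-1))%Z by lia. replace (-j-1)%Z with (-(j+1))%Z by lia.
  rewrite !Hs. rewrite (Rplus_comm (r j) (r (j-1)%Z)), (Rplus_comm (r (j+1)%Z) (r j)). ring. Qed.

Lemma RHS_ext N K f r r' j : (forall m, (-N <= m <= N)%Z -> r m = r' m) ->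
  (0 < K)%Z -> (K < N - 1)%Z -> (-K < j < K)%Z -> RHS N K f r j = RHS N K f r' j.
Proof. intros H HK HKN Hj. unfold RHS, u, eta_hat. rewrite !H by lia. reflexivity. Qed.
Theorem corollary4p7 (t2 a1 : R) (N K : Z) (f : Z -> R) (rU : R) :
  is_tilde_r2 t2 -> is_a1 a1 ->
  (0 < N)%Z -> (0 < K)%Z -> (K < N - 1)%Z ->
  (forall j, (0 <= j <= N)%Z -> f (j + 1)%Z = - f (- j)%Z) ->
  t2 / 2 < rU < a1 ->
  r_L t2 rU < rU ->
  (forall j, (-N <= j <= N)%Z ->
     eta (r_L t2 rU) + 4 * eta (2 * r_L t2 rU) - 2 * eta (2 * rU) < Phi N f j
     < eta rU + 4 * eta (2 * rU) - 2 * eta (2 * r_L t2 rU)) ->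
  exists r : Z -> R,
    (symmetric_vec N r /\ in_Omega N (r_L t2 rU) rU r /\ equilibrium N K f r) /\
    (forall r' : Z -> R,
       symmetric_vec N r' -> in_Omega N (r_L t2 rU) rU r' -> equilibrium N K f r' ->
       forall j, (-N <= j <= N)%Z -> r' j = r j).
Proof.
  intros Ht2 Ha1 HN HK HKN Hf [HtU HUa] HLU HPhi.
  assert (Ht2ge := t2_ge t2 Ht2).
  assert (HL1 : t2/2 <= r_L t2 rU) by (unfold r_L; apply Rmax_l).
  assert (HLp : Rpower (63 / (16 * eta1 rU)) (1 / 8) <= r_L t2 rU) by (unfold r_L; apply Rmax_r).
  set (L := r_L t2 rU) in *.
  assert (HL0 : 0 < L) by lra.
  assert (H2L : 6/5 <= 2*L) by lra.
  assert (HU6 : rU^6 < 183/100) by (apply (a1_bound a1); auto; lra).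
  rewrite eta1_E in HLp by lra.
  set (d := EE1 rU) in *.
  assert (Hd : 0 < d).
  { unfold d; rewrite E1_form by lra. apply Rdiv_lt_0_compat. lra. apply pow_lt; lra. }
  set (c := 84 / (2*L)^8).
  assert (HL8 : 0 < L^8) by (apply pow_lt; lra).
  assert (Hc : 0 < c) by (unfold c; apply Rdiv_lt_0_compat; [lra | apply pow_lt; lra]).
  assert (Hdc : 12 * c <= d).
  { set (X := 63 / (16 * d)) in *. assert (HX : 0 < X) by (unfold X; apply Rdiv_lt_0_compat; lra).
    assert (Hp : 0 < Rpower X (1/8)) by (unfold Rpower; apply exp_pos).
    assert (Hp8 : (Rpower X (1/8))^8 <= L^8) by (apply pow_incr; lra).
    rewrite <- Rpower_pow in Hp8 by auto. rewrite Rpower_mult in Hp8.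
    replace (1 / 8 * INR 8) with 1 in Hp8 by (simpl; field). rewrite Rpower_1 in Hp8 by auto.
    assert (16 * d * X = 63) by (unfold X; field; lra).
    assert (c * (16 * L^8) = 84 / 16) by (unfold c; field; lra).
    nra. }
  assert (HU13 : rU^6 < 13/4) by lra.
  assert (etaInc : forall x y, L <= x <= y -> y <= rU -> d * (y - x) <= eta y - eta x).
  { intros x y Hx Hy. rewrite !eta_E by lra. apply (M1 L rU); auto; lra. }
  assert (etaPair : forall s t, 2*L <= s <= t -> - c * (t - s) <= eta t - eta s <= 0).
  { intros s t Hs. rewrite !eta_E by lra. apply (M2 L); auto. }
  assert (etaLip : forall s t, 2*L <= s -> 2*L <= t -> Rabs (eta s - eta t) <= c * Rabs (s - t)).
  { intros s t Hs Ht. destruct (Rle_dec s t) as [h|h].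
    - pose proof (etaPair s t ltac:(lra)). unfold Rabs; repeat destruct Rcase_abs; nra.
    - pose proof (etaPair t s ltac:(lra)). unfold Rabs; repeat destruct Rcase_abs; nra. }
  assert (etaRange : forall s, 2*L <= s <= 2*rU -> eta (2*rU) <= eta s <= eta (2*L)).
  { intros s Hs. pose proof (etaPair (2*L) s ltac:(lra)). pose proof (etaPair s (2*rU) ltac:(lra)). lra. }
  assert (hatInc : forall x y, L <= x <= y -> y <= rU -> (d - 4*c) * (y - x) <= eta_hat y - eta_hat x).
  { intros x y Hx Hy. unfold eta_hat. pose proof (etaInc x y Hx Hy).
    pose proof (etaPair (2*x) (2*y) ltac:(lra)). lra. }
  assert (hatInj : forall x y, L <= x <= rU -> L <= y <= rU -> eta_hat x = eta_hat y -> x = y).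
  { intros x y Hx Hy He. destruct (Rle_dec x y) as [h|h].
    - pose proof (hatInc x y ltac:(lra) ltac:(lra)). nra.
    - pose proof (hatInc y x ltac:(lra) ltac:(lra)). nra. }
  assert (etaInvLip : forall x y, L <= x <= rU -> L <= y <= rU -> d * Rabs (x - y) <= Rabs (eta x - eta y)).
  { intros x y Hx Hy. destruct (Rle_dec x y) as [h|h].
    - pose proof (etaInc x y ltac:(lra) ltac:(lra)). unfold Rabs; repeat destruct Rcase_abs; nra.
    - pose proof (etaInc y x ltac:(lra) ltac:(lra)). unfold Rabs; repeat destruct Rcase_abs; nra. }
  assert (etaInj : forall x y, L <= x <= rU -> L <= y <= rU -> eta x = eta y -> x = y).
  { intros x y Hx Hy He. pose proof (etaInvLip x y Hx Hy). rewrite He in H.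
    replace (eta y - eta y) with 0 in H by ring. rewrite Rabs_R0 in H.
    revert H. unfold Rabs; destruct Rcase_abs; nra. }
  assert (Hrho_ex : forall j, exists y, (-N <= j <= -K)%Z -> L < y < rU /\ eta_hat y = Phi N f j).
  { intros j. destruct (Z_le_dec (-N) j); [destruct (Z_le_dec j (-K))|].
    2,3: exists 0; intros; lia.
    specialize (HPhi j ltac:(lia)). pose proof (etaPair (2*L) (2*rU) ltac:(lra)).
    assert (Hlo : eta_hat L < Phi N f j) by (unfold eta_hat; lra).
    assert (Hhi : Phi N f j < eta_hat rU) by (unfold eta_hat; lra).
    unfold eta_hat in Hlo, Hhi. rewrite !eta_E in Hlo, Hhi by lra.
    destruct (Ranalysis5.IVT_interv (fun y => EE y + 2 * EE (2*y) - Phi N f j) L rU) as [z [Hz Hz0]].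
    - intros a Ha. apply Ehat_cont; lra.
    - auto.
    - lra.
    - lra.
    - exists z. intros _. assert (Heq : eta_hat z = Phi N f j).
      { unfold eta_hat. rewrite !eta_E by lra. lra. }
      split; auto. split.
      + destruct (Req_dec z L); [subst z; lra|lra].
      + destruct (Req_dec z rU); [subst z; lra|lra]. }
  set (rho := fun j => proj1_sig (constructive_indefinite_description _ (Hrho_ex j))).
  assert (Hrho : forall j, (-N <= j <= -K)%Z -> L < rho j < rU /\ eta_hat (rho j) = Phi N f j).
  { intros j. unfold rho. destruct constructive_indefinite_description; simpl; auto. }
  assert (Hinv_ex : forall z, exists y, eta L < z < eta rU -> L < y < rU /\ eta y = z).
  { intros z. destruct (Rlt_dec (eta L) z); [destruct (Rlt_dec z (eta rU))|].
    2,3: exists 0; intros; lra.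
    rewrite !eta_E in r, r0 by lra.
    destruct (Ranalysis5.IVT_interv (fun y => EE y - z) L rU) as [y [Hy Hy0]].
    - intros a Ha. apply E_cont_shift; lra.
    - auto.
    - lra.
    - lra.
    - exists y. intros _. assert (Heq : eta y = z) by (rewrite eta_E by lra; lra).
      split; auto. split.
      + destruct (Req_dec y L); [subst y; lra|lra].
      + destruct (Req_dec y rU); [subst y; lra|lra]. }
  set (einv := fun z => proj1_sig (constructive_indefinite_description _ (Hinv_ex z))).
  assert (Heinv : forall z, eta L < z < eta rU -> L < einv z < rU /\ eta (einv z) = z).
  { intros z. unfold einv. destruct constructive_indefinite_description; simpl; auto. }
  set (n := Z.to_nat K).
  set (T := fun (x : nat -> R) (i : nat) => einv (RHS N K f (build K rho x) (Z.of_nat i))).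
  assert (Hbbox : forall x, inbox n L rU x -> forall j, (-N <= j <= N)%Z -> L <= build K rho x j <= rU).
  { intros x Hx j Hj. unfold build. destruct (Z.ltb_spec (Z.abs j) K).
    - apply Hx. unfold n; lia.
    - pose proof (Hrho (- Z.abs j)%Z ltac:(lia)). lra. }
  assert (HRHS : forall r, (forall j, (-N <= j <= N)%Z -> L <= r j <= rU) ->
             forall j, (-K < j < K)%Z -> eta L < RHS N K f r j < eta rU).
  { intros r Hr j Hj. unfold RHS, u, eta_hat.
    pose proof (Hr (-K)%Z ltac:(lia)). pose proof (Hr (-K+1)%Z ltac:(lia)).
    pose proof (Hr (-K-1)%Z ltac:(lia)). pose proof (Hr j ltac:(lia)).
    pose proof (Hr (j+1)%Z ltac:(lia)). pose proof (Hr (j-1)%Z ltac:(lia)).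
    replace (-K-1)%Z with (-K-1)%Z by lia.
    pose proof (etaRange (2 * r (-K)%Z) ltac:(lra)).
    pose proof (etaRange (r (-K)%Z + r (-K+1)%Z) ltac:(lra)).
    pose proof (etaRange (r (-K-1)%Z + r (-K)%Z) ltac:(lra)).
    pose proof (etaRange (r j + r (j+1)%Z) ltac:(lra)).
    pose proof (etaRange (r (j-1)%Z + r j) ltac:(lra)).
    pose proof (HPhi j ltac:(lia)).
    replace (-K - 1)%Z with (-K-1)%Z in * by lia. lra. }
  assert (HTbox : forall x, inbox n L rU x -> inbox n L rU (T x)).
  { intros x Hx i Hi. unfold T. 
    assert (H := HRHS _ (Hbbox x Hx) (Z.of_nat i) ltac:(unfold n in Hi; lia)).
    pose proof (Heinv _ H). lra. }
  set (q := 6 * c / d).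
  assert (Hq : 0 <= q < 1).
  { unfold q. split. apply Rlt_le, Rdiv_lt_0_compat; lra.
    apply (Rmult_lt_reg_r d); auto. unfold Rdiv. rewrite Rmult_assoc, Rinv_l by lra. lra. }
  assert (HRHSlip : forall r r' delta, (forall j, (-N <= j <= N)%Z -> L <= r j <= rU) ->
      (forall j, (-N <= j <= N)%Z -> L <= r' j <= rU) ->
      r (-K)%Z = r' (-K)%Z -> r (-K-1)%Z = r' (-K-1)%Z ->
      (forall j, (-N <= j <= N)%Z -> Rabs (r j - r' j) <= delta) ->
      forall j, (-K < j < K)%Z -> Rabs (RHS N K f r j - RHS N K f r' j) <= 6 * c * delta).
  { intros r r' delta Hr Hr' E0 E1' Hd' j Hj. unfold RHS, u, eta_hat. rewrite <- E0, <- E1'.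
    pose proof (Hr (-K)%Z ltac:(lia)). pose proof (Hr (-K+1)%Z ltac:(lia)).
    pose proof (Hr j ltac:(lia)). pose proof (Hr (j+1)%Z ltac:(lia)). pose proof (Hr (j-1)%Z ltac:(lia)).
    pose proof (Hr' (-K+1)%Z ltac:(lia)).
    pose proof (Hr' j ltac:(lia)). pose proof (Hr' (j+1)%Z ltac:(lia)). pose proof (Hr' (j-1)%Z ltac:(lia)).
    pose proof (Hd' (-K+1)%Z ltac:(lia)). pose proof (Hd' j ltac:(lia)).
    pose proof (Hd' (j+1)%Z ltac:(lia)). pose proof (Hd' (j-1)%Z ltac:(lia)).
    assert (D0 : 0 <= delta) by (pose proof (Rabs_pos (r j - r' j)); lra).
    assert (D1 : Rabs (eta (r (-K)%Z + r (-K+1)%Z) - eta (r (-K)%Z + r' (-K+1)%Z)) <= 2 * c * delta).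
    { eapply Rle_trans. apply etaLip; lra. 
      replace (r (-K)%Z + r (-K+1)%Z - (r (-K)%Z + r' (-K+1)%Z)) with (r (-K+1)%Z - r' (-K+1)%Z) by ring. nra. }
    assert (D2 : Rabs (eta (r j + r (j+1)%Z) - eta (r' j + r' (j+1)%Z)) <= 2 * c * delta).
    { eapply Rle_trans. apply etaLip; lra. pose proof (abs_sum (r j) (r (j+1)%Z) (r' j) (r' (j+1)%Z)). nra. }
    assert (D3 : Rabs (eta (r (j-1)%Z + r j) - eta (r' (j-1)%Z + r' j)) <= 2 * c * delta).
    { eapply Rle_trans. apply etaLip; lra. pose proof (abs_sum (r (j-1)%Z) (r j) (r' (j-1)%Z) (r' j)). nra. }
    pose proof (abs3 _ _ _ _ _ _ D1 D2 D3) as Hab3.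
    match goal with |- Rabs ?a <= _ => match type of Hab3 with Rabs ?b <= _ => replace a with b by ring end end.
    lra. }
  assert (HbK : forall x, build K rho x (-K)%Z = rho (-K)%Z).
  { intros x. unfold build. destruct (Z.ltb_spec (Z.abs (-K)) K); [lia|]. f_equal. lia. }
  assert (HbK1 : forall x, build K rho x (-K-1)%Z = rho (-K-1)%Z).
  { intros x. unfold build. destruct (Z.ltb_spec (Z.abs (-K-1)) K); [lia|]. f_equal. lia. }
  assert (Hlip : lipq n L rU q T).
  { intros x y delta Hx Hy Hdl i Hi.
    assert (D0 : 0 <= delta) by (pose proof (Hdl 0%nat ltac:(unfold n; lia)); pose proof (Rabs_pos (x 0%nat - y 0%nat)); lra).
    assert (Hbd : forall j, (-N <= j <= N)%Z -> Rabs (build K rho x j - build K rho y j) <= delta).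
    { intros j Hj. unfold build. destruct (Z.ltb_spec (Z.abs j) K).
      - apply Hdl. unfold n; lia.
      - unfold Rminus; rewrite Rplus_opp_r, Rabs_R0; auto. }
    assert (Hi' : (-K < Z.of_nat i < K)%Z) by (unfold n in Hi; lia).
    pose proof (HRHSlip _ _ delta (Hbbox x Hx) (Hbbox y Hy) (eq_trans (HbK x) (eq_sym (HbK y)))
       (eq_trans (HbK1 x) (eq_sym (HbK1 y))) Hbd _ Hi') as H1.
    unfold T. set (a := RHS N K f (build K rho x) (Z.of_nat i)) in *.
    set (b := RHS N K f (build K rho y) (Z.of_nat i)) in *.
    pose proof (Heinv a (HRHS _ (Hbbox x Hx) _ Hi')) as [Hq1 Hq2].
    pose proof (Heinv b (HRHS _ (Hbbox y Hy) _ Hi')) as [Hq3 Hq4].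
    pose proof (etaInvLip (einv a) (einv b) ltac:(lra) ltac:(lra)) as H2.
    rewrite Hq2, Hq4 in H2.
    apply (Rmult_le_reg_l d); auto. unfold q. 
    replace (d * (6 * c / d * delta)) with (6 * c * delta) by (field; lra). lra. }
  destruct (contraction_fix n L rU q T ltac:(lra) Hq Hlip HTbox) as [xs [Hxs Hfix]].
  set (r := build K rho xs).
  assert (Hrsym : forall m, r (-m)%Z = r m) by (intros; apply build_sym).
  assert (Hrbox : forall j, (-N <= j <= N)%Z -> L < r j < rU).
  { intros j Hj. unfold r, build. destruct (Z.ltb_spec (Z.abs j) K).
    - assert (Hk : (Z.to_nat (Z.abs j) < n)%nat) by (unfold n; lia).
      rewrite <- (Hfix _ Hk). unfold T.
      apply Heinv. apply HRHS. apply Hbbox; auto. lia.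
    - apply Hrho. lia. }
  assert (Hsym3 : forall r0 : Z -> R, symmetric_vec N r0 -> sym3 K r0).
  { intros r0 Hs. unfold sym3. split; [|split].
    - symmetry; apply Hs; lia.
    - replace (-K-1)%Z with (-(K+1))%Z by lia. symmetry; apply Hs; lia.
    - replace (-K+1)%Z with (-(K-1))%Z by lia. destruct (Z.eq_dec K 1).
      + subst K. reflexivity.
      + symmetry; apply Hs; lia. }
  assert (Hout : forall j, (-N <= j <= -K)%Z -> r j = rho j).
  { intros j Hj. unfold r, build. destruct (Z.ltb_spec (Z.abs j) K); [lia|]. f_equal; lia. }
  assert (Hmid : forall j, (-K < j < K)%Z -> eta (r j) = RHS N K f r j).
  { intros j Hj. 
    assert (Hk : (Z.to_nat (Z.abs j) < n)%nat) by (unfold n; lia).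
    assert (E0 : r j = xs (Z.to_nat (Z.abs j))).
    { unfold r at 1, build. destruct (Z.ltb_spec (Z.abs j) K); [reflexivity|lia]. }
    rewrite E0, <- (Hfix _ Hk). unfold T. fold r.
    assert (Hrb : forall j0, (-N <= j0 <= N)%Z -> L <= r j0 <= rU) by (intros j0 Hj0; pose proof (Hrbox j0 Hj0); lra).
    rewrite (proj2 (Heinv _ (HRHS r Hrb (Z.of_nat (Z.to_nat (Z.abs j))) ltac:(lia)))).
    destruct (Z_le_dec 0 j).
    - replace (Z.of_nat (Z.to_nat (Z.abs j))) with j by lia. reflexivity.
    - replace (Z.of_nat (Z.to_nat (Z.abs j))) with (-j)%Z by lia.
      pose proof (RHS_sym N K f r (-j) HN Hf Hrsym ltac:(lia)) as Hs. rewrite Z.opp_involutive in Hs.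
      auto. }
  exists r. split; [split; [|split]|].
  - intros j _. apply Hrsym.
  - intros j Hj. apply Hrbox; auto.
  - apply eq_of_P; auto. apply Hsym3. intros j _; apply Hrsym.
    intros j Hj. destruct (Z_le_dec j (-K)); [|destruct (Z_le_dec K j)].
    + unfold P. destruct (Z.leb_spec j (-K)); [|lia]. simpl. rewrite Hout by lia. apply Hrho; lia.
    + unfold P. destruct (Z.leb_spec j (-K)); [lia|]. destruct (Z.leb_spec K j); [|lia]. simpl.
      rewrite <- Hrsym, Hout by lia. rewrite (proj2 (Hrho (-j)%Z ltac:(lia))). apply Phi_sym; auto; lia.
    + apply P_mid_iff; [lia|]. apply Hmid; lia.
  - intros r' Hs' Ho' He'.
    pose proof (P_of_eq N K f r' HK HKN (Hsym3 r' Hs') He') as HP'.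
    assert (Hout' : forall j, (-N <= j <= -K)%Z -> r' j = rho j).
    { intros j Hj. pose proof (HP' j ltac:(lia)) as H1. unfold P in H1.
      destruct (Z.leb_spec j (-K)); [|lia]. simpl in H1.
      pose proof (Hrho j Hj). pose proof (Ho' j ltac:(lia)). apply hatInj; try lra. }
    set (xs' := fun k : nat => r' (Z.of_nat k)).
    assert (Hagree : forall j, (-N <= j <= N)%Z -> build K rho xs' j = r' j).
    { intros j Hj. unfold build, xs'. destruct (Z.ltb_spec (Z.abs j) K); destruct (Z_le_dec 0 j).
      - f_equal; lia.
      - replace (Z.of_nat (Z.to_nat (Z.abs j))) with (- j)%Z by lia.
        pose proof (Hs' (-j)%Z ltac:(lia)) as Hq'. rewrite Z.opp_involutive in Hq'. auto.
      - rewrite <- Hout' by lia. replace (Z.abs j) with j by lia. apply Hs'; lia.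
      - rewrite <- Hout' by lia. f_equal; lia. }
    assert (Hxs'box : inbox n L rU xs').
    { intros k Hk. unfold xs'. pose proof (Ho' (Z.of_nat k) ltac:(unfold n in Hk; lia)). lra. }
    assert (Hfix' : forall i, (i < n)%nat -> T xs' i = xs' i).
    { intros i Hi. assert (Hi' : (-K < Z.of_nat i < K)%Z) by (unfold n in Hi; lia).
      unfold T. rewrite (RHS_ext N K f _ r') by (auto; lia).
      pose proof (proj1 (P_mid_iff N K f r' _ Hi') (HP' (Z.of_nat i) ltac:(lia))) as H1.
      assert (Hb : forall j, (-N <= j <= N)%Z -> L <= r' j <= rU) by (intros j0 Hj0; pose proof (Ho' j0 Hj0); lra).
      pose proof (Heinv _ (HRHS r' Hb _ Hi')) as [H2 H3].
      apply etaInj; try lra. unfold xs'. pose proof (Ho' (Z.of_nat i) ltac:(lia)). lra.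
      unfold xs'. rewrite H3. auto. }
    pose proof (contraction_uniq n L rU q T xs' xs Hq Hlip Hxs'box Hxs Hfix' Hfix) as Hu.
    intros j Hj. rewrite <- Hagree by auto. unfold r, build.
    destruct (Z.ltb_spec (Z.abs j) K); auto. apply Hu. unfold n; lia.
Qed.
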